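(* For every $s\in\mathbb{C}$ with $\mathrm{Re}(s)>1$, $$\sum_{n\geq1}\frac{\tau(n)\Omega(n)}{n^s}=2\zeta^2(s)P_\Omega(s),\qquad\text{where } P_\Omega(s)=\sum_p\frac{\Omega(p)}{p^s-1}=\sum_p\frac{1}{p^s-1}.$$
   Context: $\tau(n)$ is the number of positive divisors of $n$, $\Omega(n)$ is the number of prime factors of $n$ counted with multiplicity, $\zeta(s)=\sum_{n\geq1}n^{-s}$ is the Riemann zeta function, and sums over $p$ run over all primes. *)

(* Defs.v *)
From Stdlib Require Import Reals.
From Coquelicot Require Import Coquelicot.
From mathcomp Require Import ssreflect ssrbool ssrnat seq prime.

Definition tau (n : nat) : nat := size (divisors n).

Definition bigOmega (n : nat) : nat :=
  foldr (fun p acc => (logn p n + acc)%nat) 0%nat (primes n).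

Open Scope R_scope.

(* complex power x^s = exp(s ln x) for real x > 0 and complex s *)
Definition cpow (x : R) (s : C) : C :=
  (exp (Re s * ln x) * cos (Im s * ln x), exp (Re s * ln x) * sin (Im s * ln x)).

(* n-th term (n >= 1, index shifted: term k is for n = k+1) of zeta(s) *)
Definition zeta_term (s : C) (k : nat) : C :=
  Cinv (cpow (INR (S k)) s).

(* term of sum_{n>=1} tau(n) Omega(n) / n^s, term k for n = k+1 *)
Definition tauOmega_term (s : C) (k : nat) : C :=
  Cdiv (RtoC (INR (tau (S k) * bigOmega (S k))%nat)) (cpow (INR (S k)) s).

(* term of P_Omega(s) = sum_p Omega(p)/(p^s - 1), indexed by all n, zero off primes *)
Definition POmega_term (s : C) (n : nat) : C :=
  if prime n then Cdiv (RtoC (INR (bigOmega n))) (Cminus (cpow (INR n) s) (RtoC 1))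
  else RtoC 0.

Definition P1_term (s : C) (n : nat) : C :=
  if prime n then Cinv (Cminus (cpow (INR n) s) (RtoC 1)) else RtoC 0.

(* Main.v *)
Require Import Defs.
From Stdlib Require Import Reals Lra Lia.
From Coquelicot Require Import Coquelicot.
From HB Require Import structures.
From mathcomp Require Import ssreflect ssrbool ssrfun eqtype ssrnat seq div prime fintype bigop path.

From mathcomp Require Import zify.
Open Scope R_scope.

Section Gen.
Local Open Scope nat_scope.
Variables (T : Type) (idx : T) (op : Monoid.com_law idx).
Variable f : nat -> nat -> T.
Hypothesis f0l : forall e, f 0 e = idx.
Hypothesis f0r : forall d, f d 0 = idx.

Lemma conv_widen n M : (n <= M)%N ->
  \big[op/idx]_(d < M.+1) \big[op/idx]_(e < M.+1 | d * e == n) f d e =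
  \big[op/idx]_(d < n.+1) \big[op/idx]_(e < n.+1 | d * e == n) f d e.
Proof.
elim: M => [|M IH]; first by rewrite leqn0 => /eqP ->.
rewrite leq_eqVlt => /orP [/eqP <- //|]; rewrite ltnS => HnM.
rewrite -IH // big_ord_recr /=.
rewrite [X in op _ X]big1; last first.
  move=> e /eqP He. case: e He => [[|e]] Hle He /=; first by rewrite f0r.
  exfalso. move: HnM; rewrite -He. rewrite mulnS. lia.
rewrite Monoid.mulm1.
apply: eq_bigr => d _.
rewrite big_mkcond big_ord_recr /= -big_mkcond /=.
case: (boolP (d * M.+1 == n)) => H.
  case: d H => [[|d] Hd] /= H; first by rewrite f0l Monoid.mulm1.
  exfalso; move: H HnM => /eqP <-. rewrite mulSn. lia.
by rewrite Monoid.mulm1.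
Qed.

Lemma conv_finite N :
  \big[op/idx]_(n < N.+1) \big[op/idx]_(d < n.+1) \big[op/idx]_(e < n.+1 | d * e == n) f d e =
  \big[op/idx]_(d < N.+1) \big[op/idx]_(e < N.+1 | d * e <= N) f d e.
Proof.
transitivity (\big[op/idx]_(n < N.+1) \big[op/idx]_(d < N.+1) \big[op/idx]_(e < N.+1 | d * e == n) f d e).
  apply: eq_bigr => n _; rewrite conv_widen //; exact: (ltn_ord n).
rewrite exchange_big /=; apply: eq_bigr => d _.
rewrite (eq_bigr (fun n : 'I_N.+1 => \big[op/idx]_(e < N.+1) (if d * e == n then f d e else idx)));
  last by move=> n _; rewrite big_mkcond.
rewrite exchange_big /= [RHS]big_mkcond /=; apply: eq_bigr => e _.
rewrite -big_mkcond /=.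
rewrite (eq_bigl (fun n : 'I_N.+1 => (n : nat) == d * e)); last by move=> n; rewrite eq_sym.
rewrite (big_ord1_eq _ (fun _ => f d e)). by rewrite ltnS.
Qed.
End Gen.

Lemma Cplus_assoc' : associative Cplus.
Proof. move=> x y z; exact: Cplus_assoc. Qed.
HB.instance Definition _ := Monoid.isComLaw.Build C (RtoC 0) Cplus Cplus_assoc' Cplus_comm Cplus_0_l.

Lemma Rplus_assoc' : associative Rplus.
Proof. move=> x y z; by rewrite Rplus_assoc. Qed.
HB.instance Definition _ := Monoid.isComLaw.Build R 0 Rplus Rplus_assoc' Rplus_comm Rplus_0_l.

Lemma norm_C (z : C) : norm z = Cmod z.
Proof. reflexivity. Qed.

Lemma sum_n_big (a : nat -> C) N : sum_n a N = \big[Cplus/RtoC 0]_(i < N.+1) a i.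
Proof.
elim: N => [|N IH]; first by rewrite sum_O big_ord_recr big_ord0 /= Cplus_0_l.
by rewrite sum_Sn IH [in RHS]big_ord_recr.
Qed.

Lemma sum_n_bigR (a : nat -> R) N : sum_n a N = \big[Rplus/0]_(i < N.+1) a i.
Proof.
elim: N => [|N IH]; first by rewrite sum_O big_ord_recr big_ord0 /= Rplus_0_l.
by rewrite sum_Sn IH [in RHS]big_ord_recr.
Qed.

Lemma bigC_mulr I (r : seq I) (P : pred I) (F : I -> C) (x : C) :
  Cmult (\big[Cplus/RtoC 0]_(i <- r | P i) F i) x = \big[Cplus/RtoC 0]_(i <- r | P i) Cmult (F i) x.
Proof.
apply: (big_morph (fun y => Cmult y x)).
- by move=> a b; rewrite Cmult_plus_distr_r.
- by rewrite Cmult_0_l.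
Qed.

Lemma bigC_mull I (r : seq I) (P : pred I) (F : I -> C) (x : C) :
  Cmult x (\big[Cplus/RtoC 0]_(i <- r | P i) F i) = \big[Cplus/RtoC 0]_(i <- r | P i) Cmult x (F i).
Proof.
apply: (big_morph (fun y => Cmult x y)).
- by move=> a b; rewrite Cmult_plus_distr_l.
- by rewrite Cmult_0_r.
Qed.

Lemma bigC_Cmod I (r : seq I) (P : pred I) (F : I -> C) :
  Cmod (\big[Cplus/RtoC 0]_(i <- r | P i) F i) <= \big[Rplus/0]_(i <- r | P i) Cmod (F i).
Proof.
apply: (big_ind2 (fun a b => Cmod a <= b)).
- rewrite Cmod_0; lra.
- move=> a1 b1 a2 b2 H1 H2. apply: Rle_trans (Cmod_triangle _ _) _; lra.
- move=> i _; lra.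
Qed.

Lemma bigR_le I (r : seq I) (P : pred I) (F G : I -> R) :
  (forall i, P i -> F i <= G i) ->
  \big[Rplus/0]_(i <- r | P i) F i <= \big[Rplus/0]_(i <- r | P i) G i.
Proof.
move=> H; apply: (big_ind2 (fun a b => a <= b)) => //; first lra.
move=> a1 b1 a2 b2 H1 H2; lra.
Qed.

Lemma bigR_ge0 I (r : seq I) (P : pred I) (F : I -> R) :
  (forall i, P i -> 0 <= F i) -> 0 <= \big[Rplus/0]_(i <- r | P i) F i.
Proof.
move=> H; apply: (big_ind (fun a => 0 <= a)) => //; first lra.
move=> a b H1 H2; lra.
Qed.

Lemma bigR_mulr I (r : seq I) (P : pred I) (F : I -> R) (x : R) :
  (\big[Rplus/0]_(i <- r | P i) F i) * x = \big[Rplus/0]_(i <- r | P i) (F i * x).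
Proof.
apply: (big_morph (fun y => y * x)).
- by move=> a b; rewrite Rmult_plus_distr_r.
- by rewrite Rmult_0_l.
Qed.

Lemma bigR_mull I (r : seq I) (P : pred I) (F : I -> R) (x : R) :
  x * (\big[Rplus/0]_(i <- r | P i) F i) = \big[Rplus/0]_(i <- r | P i) (x * F i).
Proof.
apply: (big_morph (fun y => x * y)).
- by move=> a b; rewrite Rmult_plus_distr_l.
- by rewrite Rmult_0_r.
Qed.

Lemma bigR_sub I (r : seq I) (P Q : pred I) (F : I -> R) :
  (forall i, 0 <= F i) -> (forall i, P i -> Q i) ->
  \big[Rplus/0]_(i <- r | P i) F i <= \big[Rplus/0]_(i <- r | Q i) F i.
Proof.
move=> H0 HPQ; rewrite (big_mkcond P) (big_mkcond Q).
apply: bigR_le => i _.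
case: (boolP (P i)) => Pi; first by rewrite (HPQ _ Pi); lra.
case: (Q i); [exact: H0|lra].
Qed.

Lemma C_lim_bound (u : nat -> C) (l : C) (e : nat -> R) :
  (forall N, Cmod (Cminus (u N) l) <= e N) -> is_lim_seq e 0 ->
  filterlim u eventually (locally l).
Proof.
move=> Hb /is_lim_seq_spec He.
apply/filterlim_locally => eps.
case: (He eps) => N HN; exists N => n Hn.
apply: norm_compat1. rewrite norm_C.
have := HN n Hn; have := Hb n. rewrite Rminus_0_r.
move=> H1 H2. apply: Rle_lt_trans H1 _. apply: Rle_lt_trans (Rle_abs _) H2.
Qed.
Lemma ex_series_bounded (a : nat -> R) M :
  (forall n, 0 <= a n) -> (forall N, sum_n a N <= M) -> ex_series a.
Proof.
move=> H0 HM.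
have [l Hl] : ex_finite_lim_seq (sum_n a).
  apply: (ex_finite_lim_seq_incr _ M) => // n; rewrite sum_Sn /plus /=; have := H0 n.+1; lra.
by exists l.
Qed.

Lemma pseries_step (sig : R) (k : nat) : 1 < sig -> (1 <= k)%nat ->
  Rpower (INR k.+1) (- sig) <= (Rpower (INR k) (1 - sig) - Rpower (INR k.+1) (1 - sig)) / (sig - 1).
Proof.
move=> Hs Hk.
have Hk0 : 0 < INR k by apply: lt_0_INR; apply/ltP.
have Hlt : INR k < INR k.+1 by rewrite S_INR; lra.
have [c [Hc1 Hc2]] := MVT_cor2 (fun x => Rpower x (1 - sig)) (fun x => (1 - sig) * Rpower x (1 - sig - 1)) _ _ Hlt
  (fun c Hc => derivable_pt_lim_power c (1 - sig) ltac:(lra)).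
have -> : Rpower (INR k) (1 - sig) - Rpower (INR k.+1) (1 - sig) = (sig - 1) * Rpower c (-sig).
  rewrite -Ropp_minus_distr Hc1 S_INR.
  replace (1 - sig - 1) with (- sig) by ring. ring.
rewrite /Rdiv Rmult_comm -Rmult_assoc Rinv_l; last lra.
rewrite Rmult_1_l !Rpower_Ropp.
apply: Rinv_le_contravar.
- apply: exp_pos.
- apply: Rle_Rpower_l; lra.
Qed.

Lemma pseries_ex (sig : R) : 1 < sig -> ex_series (fun n => Rpower (INR n.+1) (- sig)).
Proof.
move=> Hs.
apply: (ex_series_bounded _ (1 + Rpower 1 (1 - sig) / (sig - 1))).
- move=> n; rewrite /Rpower; left; apply: exp_pos.
- have Hpos : forall x, 0 <= Rpower x (1 - sig) by move=> x; left; apply: exp_pos.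
  suff H : forall N, sum_n (fun n => Rpower (INR n.+1) (- sig)) N <=
     1 + (Rpower 1 (1 - sig) - Rpower (INR N.+1) (1 - sig)) / (sig - 1).
    move=> N; apply: Rle_trans (H N) _.
    have := Hpos (INR N.+1). have : 0 < sig - 1 by lra. move=> h1 h2.
    apply: Rplus_le_compat_l. rewrite /Rdiv; apply: Rmult_le_compat_r; [left; apply: Rinv_0_lt_compat; lra|lra].
  elim=> [|N IH].
  + rewrite sum_O /= Rminus_diag /Rdiv Rmult_0_l Rplus_0_r /Rpower ln_1 Rmult_0_r exp_0; lra.
  + rewrite sum_Sn; change (plus ?a ?b) with (a + b).
    have := pseries_step sig N.+1 Hs (ltac:(by [])).
    rewrite /Rdiv in IH * => H.
    lra.
Qed.

Lemma tail_sum (a : nat -> R) N m : (m <= N)%N ->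
  \big[Rplus/0]_(d < N.+1 | (m < d)%N) a d = sum_n a N - sum_n a m.
Proof.
move=> HmN; rewrite !sum_n_bigR [X in _ = X - _](bigID (fun d : 'I_N.+1 => (d < m.+1)%N)) /=.
rewrite -(@big_ord_widen _ _ _ m.+1 N.+1 a HmN).
rewrite Rplus_comm /Rminus Rplus_assoc Rplus_opp_r Rplus_0_r.
by apply: eq_bigl => d /=; rewrite ltnS -ltnNge.
Qed.

Lemma C_lim_norm (u : nat -> C) l : filterlim u eventually (locally l) ->
  is_lim_seq (fun n => Cmod (Cminus (u n) l)) 0.
Proof.
move=> /(filterlim_locally_ball_norm (K := C_AbsRing)) H.
apply/is_lim_seq_spec => eps. case: (H eps) => N HN; exists N => n Hn.
rewrite Rminus_0_r Rabs_pos_eq; last exact: Cmod_ge_0.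
exact: HN.
Qed.

Lemma Cmod_minus_le (x y : C) : Cmod x <= Cmod y + Cmod (Cminus x y).
Proof.
have H := Cmod_triangle y (Cminus x y).
have E : Cplus y (Cminus x y) = x by rewrite /Cminus; ring.
by rewrite E in H.
Qed.

Lemma C_lim_mult (u v : nat -> C) a b : filterlim u eventually (locally a) ->
  filterlim v eventually (locally b) ->
  filterlim (fun n => Cmult (u n) (v n)) eventually (locally (Cmult a b)).
Proof.
move=> /C_lim_norm Hu /C_lim_norm Hv.
apply: (C_lim_bound _ _ (fun n => Cmod (Cminus (u n) a) * (Cmod b + Cmod (Cminus (v n) b)) + Cmod a * Cmod (Cminus (v n) b))).
- move=> n.
  have -> : Cminus (Cmult (u n) (v n)) (Cmult a b) = Cplus (Cmult (Cminus (u n) a) (v n)) (Cmult a (Cminus (v n) b)).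
    rewrite /Cminus; ring.
  apply: Rle_trans (Cmod_triangle _ _) _.
  rewrite !Cmod_mult.
  apply: Rplus_le_compat_r; apply: Rmult_le_compat_l; first exact: Cmod_ge_0.
  exact: Cmod_minus_le.
- have -> : 0 = 0 * (Cmod b + 0) + Cmod a * 0 by ring.
  apply: is_lim_seq_plus'; last exact: (is_lim_seq_mult' _ _ _ _ (is_lim_seq_const _) Hv).
  apply: is_lim_seq_mult' => //; apply: is_lim_seq_plus' => //; exact: is_lim_seq_const.
Qed.

Lemma sqrt_eventually : filterlim Nat.sqrt eventually eventually.
Proof.
move=> P [M HM]; exists (M * M)%nat => n Hn; apply: HM.
have := Nat.sqrt_le_mono _ _ Hn. by rewrite Nat.sqrt_square.
Qed.

Definition dconv (al be : nat -> C) (n : nat) : C :=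
  \big[Cplus/RtoC 0]_(d < n.+1) \big[Cplus/RtoC 0]_(e < n.+1 | (d * e == n)%N) Cmult (al d) (be e).

Definition rconv (al be : nat -> R) (n : nat) : R :=
  \big[Rplus/0]_(d < n.+1) \big[Rplus/0]_(e < n.+1 | (d * e == n)%N) (al d * be e).

Lemma dconv_sum al be N : al 0%nat = RtoC 0 -> be 0%nat = RtoC 0 ->
  sum_n (dconv al be) N = \big[Cplus/RtoC 0]_(d < N.+1) \big[Cplus/RtoC 0]_(e < N.+1 | (d * e <= N)%N) Cmult (al d) (be e).
Proof.
move=> H1 H2; rewrite sum_n_big.
apply: (@conv_finite _ _ Cplus (fun d e => Cmult (al d) (be e))) => x; by rewrite ?H1 ?H2 ?Cmult_0_l ?Cmult_0_r.
Qed.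

Lemma rconv_sum al be N : al 0%nat = 0 -> be 0%nat = 0 ->
  sum_n (rconv al be) N = \big[Rplus/0]_(d < N.+1) \big[Rplus/0]_(e < N.+1 | (d * e <= N)%N) (al d * be e).
Proof.
move=> H1 H2; rewrite sum_n_bigR.
apply: (@conv_finite _ _ Rplus (fun d e => al d * be e)) => x; rewrite ?H1 ?H2; ring.
Qed.

Lemma prod_sum_n al be N : Cmult (sum_n al N) (sum_n be N) =
  \big[Cplus/RtoC 0]_(d < N.+1) \big[Cplus/RtoC 0]_(e < N.+1) Cmult (al d) (be e).
Proof.
rewrite !sum_n_big bigC_mulr; apply: eq_bigr => d _; by rewrite bigC_mull.
Qed.

Lemma prod_sum_nR al be N : sum_n al N * sum_n be N =
  \big[Rplus/0]_(d < N.+1) \big[Rplus/0]_(e < N.+1) (al d * be e).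
Proof.
rewrite !sum_n_bigR bigR_mulr; apply: eq_bigr => d _; by rewrite bigR_mull.
Qed.

Lemma conv_err (al be : nat -> C) N m : (m * m <= N)%N -> (m <= N)%N ->
  Cmod (Cminus (\big[Cplus/RtoC 0]_(d < N.+1) \big[Cplus/RtoC 0]_(e < N.+1 | (d * e <= N)%N) Cmult (al d) (be e))
               (\big[Cplus/RtoC 0]_(d < N.+1) \big[Cplus/RtoC 0]_(e < N.+1) Cmult (al d) (be e)))
  <= (sum_n (fun n => Cmod (al n)) N - sum_n (fun n => Cmod (al n)) m) * sum_n (fun n => Cmod (be n)) N
     + sum_n (fun n => Cmod (al n)) N * (sum_n (fun n => Cmod (be n)) N - sum_n (fun n => Cmod (be n)) m).
Proof.
move=> Hmm HmN.
set a := fun n => Cmod (al n). set b := fun n => Cmod (be n).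
have Ha : forall n, 0 <= a n by move=> n; exact: Cmod_ge_0.
have Hb : forall n, 0 <= b n by move=> n; exact: Cmod_ge_0.
set S := \big[Cplus/RtoC 0]_(d < N.+1) \big[Cplus/RtoC 0]_(e < N.+1 | (d * e <= N)%N) Cmult (al d) (be e).
set Rm := \big[Cplus/RtoC 0]_(d < N.+1) \big[Cplus/RtoC 0]_(e < N.+1 | (N < d * e)%N) Cmult (al d) (be e).
have -> : \big[Cplus/RtoC 0]_(d < N.+1) \big[Cplus/RtoC 0]_(e < N.+1) Cmult (al d) (be e) = Cplus S Rm.
  rewrite /S /Rm -big_split /=; apply: eq_bigr => d _.
  rewrite (bigID (fun e : 'I_N.+1 => (d * e <= N)%N)) /=; congr Cplus.
  by apply: eq_bigl => e; rewrite ltnNge.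
have -> : Cminus S (Cplus S Rm) = Copp Rm by rewrite /Cminus; ring.
rewrite Cmod_opp.
apply: Rle_trans (bigC_Cmod _ _ _ _) _.
apply: Rle_trans (_ : \big[Rplus/0]_(d < N.+1) ((if (m < d)%N then \big[Rplus/0]_(e < N.+1) (a d * b e) else 0)
         + \big[Rplus/0]_(e < N.+1 | (m < e)%N) (a d * b e)) <= _).
  apply: bigR_le => d _.
  apply: Rle_trans (bigC_Cmod _ _ _ _) _.
  rewrite (eq_bigr (fun e : 'I_N.+1 => a d * b e)); last by move=> e _; rewrite Cmod_mult.
  have Hg : forall e, 0 <= a d * b e by move=> e; apply: Rmult_le_pos.
  case: (ltnP m d) => Hmd.
  - apply: Rle_trans (_ : _ <= \big[Rplus/0]_(e < N.+1) (a d * b e)) _.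
      by apply: bigR_sub.
    rewrite -[X in X <= _]Rplus_0_r; apply: Rplus_le_compat_l; apply: bigR_ge0 => e _; exact: Hg.
  - rewrite Rplus_0_l; apply: bigR_sub => // e He.
    rewrite ltnNge; apply/negP => Hem.
    move: He; rewrite ltnNge => /negP; apply.
    apply: leq_trans Hmm; exact: leq_mul.
rewrite big_split /= -big_mkcond /=.
rewrite (eq_bigr (fun d : 'I_N.+1 => a d * sum_n b N)); last by move=> d _; rewrite sum_n_bigR bigR_mull.
rewrite -bigR_mulr tail_sum //.
rewrite (eq_bigr (fun d : 'I_N.+1 => a d * (sum_n b N - sum_n b m))); last by move=> d _; rewrite -tail_sum // bigR_mull.
rewrite -bigR_mulr -sum_n_bigR. lra.
Qed.

Lemma sum_n_le_lim (a : nat -> R) l N : (forall n, 0 <= a n) -> is_series a l -> sum_n a N <= l.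
Proof.
move=> H0 Hl.
apply: (is_lim_seq_incr_compare (sum_n a) l) => //.
move=> n; rewrite sum_Sn; change (plus ?x ?y) with (x + y); have := H0 n.+1; lra.
Qed.

Lemma dconv_series (al be : nat -> C) A B :
  al 0%nat = RtoC 0 -> be 0%nat = RtoC 0 ->
  ex_series (fun n => Cmod (al n)) -> ex_series (fun n => Cmod (be n)) ->
  is_series al A -> is_series be B ->
  is_series (dconv al be) (Cmult A B) /\ ex_series (fun n => Cmod (dconv al be n)).
Proof.
move=> H1 H2 [Ab HAb] [Bb HBb] HA HB.
set a := fun n => Cmod (al n). set b := fun n => Cmod (be n).
have Ha : forall n, 0 <= a n by move=> n; exact: Cmod_ge_0.
have Hb : forall n, 0 <= b n by move=> n; exact: Cmod_ge_0.
split.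
- apply: (C_lim_bound _ _ (fun N => (sum_n a N - sum_n a (Nat.sqrt N)) * sum_n b N
     + sum_n a N * (sum_n b N - sum_n b (Nat.sqrt N))
     + Cmod (Cminus (Cmult (sum_n al N) (sum_n be N)) (Cmult A B)))).
  + move=> N.
    have E : Cminus (sum_n (dconv al be) N) (Cmult A B) =
      Cplus (Cminus (sum_n (dconv al be) N) (Cmult (sum_n al N) (sum_n be N)))
            (Cminus (Cmult (sum_n al N) (sum_n be N)) (Cmult A B)) by rewrite /Cminus; ring.
    rewrite E; apply: Rle_trans (Cmod_triangle _ _) _; apply: Rplus_le_compat_r.
    rewrite dconv_sum // prod_sum_n.
    apply: conv_err.
    * have [H _] := Nat.sqrt_spec' N. apply/ssrnat.leP. exact: H.
    * apply/ssrnat.leP; exact: Nat.sqrt_le_lin.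
  + have HAb' : is_lim_seq (sum_n a) Ab by exact: HAb.
    have HBb' : is_lim_seq (sum_n b) Bb by exact: HBb.
    have HAs := is_lim_seq_subseq _ _ _ sqrt_eventually HAb'.
    have HBs := is_lim_seq_subseq _ _ _ sqrt_eventually HBb'.
    have HP := C_lim_norm _ _ (C_lim_mult _ _ _ _ HA HB).
    have -> : 0 = (Ab - Ab) * Bb + Ab * (Bb - Bb) + 0 by ring.
    apply: is_lim_seq_plus' => //.
    apply: is_lim_seq_plus'; apply: is_lim_seq_mult' => //; exact: is_lim_seq_minus'.
- apply: (ex_series_le _ (rconv a b)).
    move=> n; rewrite /norm /= /abs /= Rabs_pos_eq; last exact: Cmod_ge_0.
    apply: Rle_trans (bigC_Cmod _ _ _ _) _; apply: bigR_le => d _.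
    apply: Rle_trans (bigC_Cmod _ _ _ _) _; apply: bigR_le => e _.
    rewrite Cmod_mult; exact: Rle_refl.
  apply: (ex_series_bounded _ (Ab * Bb)).
    move=> n; apply: bigR_ge0 => d _; apply: bigR_ge0 => e _; exact: Rmult_le_pos.
  move=> N; rewrite rconv_sum; [|by rewrite /a H1 Cmod_0|by rewrite /b H2 Cmod_0].
  apply: Rle_trans (_ : _ <= sum_n a N * sum_n b N) _.
    rewrite prod_sum_nR; apply: bigR_le => d _; apply: bigR_sub => // e; exact: Rmult_le_pos.
  apply: Rmult_le_compat.
  + rewrite sum_n_bigR; exact: bigR_ge0.
  + rewrite sum_n_bigR; exact: bigR_ge0.
  + exact: sum_n_le_lim.
  + exact: sum_n_le_lim.
Qed.

Section Arith.
Local Open Scope nat_scope.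

(* J p d = 1 iff d = p^k with k >= 1 *)
Definition Jp (p d : nat) : nat := (0 < logn p d) && (d == p ^ logn p d).
Definition Lam0 (d : nat) : nat := \sum_(p < d.+1 | prime p) Jp p d.

Lemma Jp_pow p j : prime p -> Jp p (p ^ j.+1) = 1.
Proof. move=> pp; by rewrite /Jp pfactorK // eqxx. Qed.

Lemma Jp_le p d : Jp p d <= 1.
Proof. by rewrite /Jp; case: (_ && _). Qed.

Lemma Jp_pos p d : 0 < Jp p d -> d = p ^ (logn p d).-1.+1.
Proof.
rewrite /Jp; case H: (0 < logn p d); case E: (d == _) => //= _.
by rewrite prednK //; apply/eqP.
Qed.

Lemma Jp_prime p d : 0 < Jp p d -> prime p.
Proof.
rewrite /Jp; case H: (0 < logn p d) => //= _.
by move: H; rewrite logn_gt0 mem_primes => /andP [].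
Qed.

Lemma Jp_lt p d : 0 < d -> d < p -> Jp p d = 0.
Proof.
move=> d0 dp; case E: (Jp p d) => [//|k].
have : 0 < Jp p d by rewrite E.
move=> /[dup] /Jp_prime pp /Jp_pos Hd.
have : p <= d by rewrite Hd expnS; apply: leq_pmulr; rewrite expn_gt0 prime_gt0.
lia.
Qed.

Lemma Jp_pdiv p d : 0 < Jp p d -> pdiv d = p.
Proof. move=> /[dup] /Jp_prime pp /Jp_pos ->; by rewrite pdiv_pfactor. Qed.

Lemma Lam0_le1 d : Lam0 d <= 1.
Proof.
rewrite /Lam0.
apply: (@leq_trans (\sum_(p < d.+1 | (p : nat) == pdiv d) 1)).
  rewrite big_mkcond [X in _ <= X]big_mkcond /=; apply: leq_sum => p _.
  case pp: (prime p) => //.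
  case E: (Jp p d) => [|k] //=.
  have : 0 < Jp p d by rewrite E.
  move=> /Jp_pdiv ->. have := Jp_le p d; rewrite E => Hk.
  by rewrite eqxx.
rewrite (big_ord1_eq _ (fun _ => 1)); by case: ifP.
Qed.

Lemma count_le n L : L <= n -> \sum_(k < n.+1 | 0 < k) (k <= L) = L.
Proof.
move=> HL.
suff H : forall m, \sum_(k < m.+1 | 0 < k) (k <= L) = minn m L.
  rewrite H; apply/minn_idPr; done.
move=> m; rewrite big_mkcond /=.
elim: m => [|m IH]. rewrite big_ord_recr big_ord0 /=. by rewrite min0n.
rewrite (big_ord_recr m.+1) /= IH.
rewrite /minn; case: (ltnP m L) => h1; case: (ltnP m.+1 L) => h2; lia.
Qed.

Lemma IJ p d M : prime p -> 0 < d -> d < M ->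
  \sum_(k < M | 0 < k) (d == p ^ k) = Jp p d.
Proof.
move=> pp d0 dM.
have E : forall k : 'I_M, (0 < k) && (d == p ^ k) = (0 < k) && ((k == logn p d :> nat) && (Jp p d > 0)).
  move=> k; case k0: (0 < (k : nat)) => //=.
  apply/idP/idP.
  - move=> /eqP ->; rewrite pfactorK // eqxx /= /Jp pfactorK // k0 eqxx //.
  - move=> /andP [/eqP Hk]; rewrite /Jp -Hk k0 /=; by case: (d == _).
rewrite big_mkcond /=.
rewrite (eq_bigr (fun k : 'I_M => if (0 < k) && ((k == logn p d :> nat) && (Jp p d > 0)) then 1 else 0)); last first.
  move=> k _; rewrite -E; by case: (0 < (k : nat)); case: (d == _).
rewrite -big_mkcond /=.
rewrite (eq_bigl (fun k : 'I_M => (fun j => (0 < j) && (Jp p d > 0)) (k : nat) && (k == logn p d :> nat))); last first.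
  by move=> k /=; case: (0 < (k : nat)); case: (_ == _); case: (0 < Jp p d).
rewrite (big_ord1_cond_eq _ (fun _ => 1) (fun j => (0 < j) && (0 < Jp p d))).
case J: (Jp p d) => [|j] /=; first by case: (_ < _); case: (0 < logn p d).
have : 0 < Jp p d by rewrite J.
move=> /[dup] H0 /Jp_pos Hd.
have := Jp_le p d; rewrite J => Hj. have -> : j = 0 by lia.
have L0 : 0 < logn p d by move: H0; rewrite /Jp; case: (0 < logn p d).
have : logn p d < d by apply: ltn_logl.
move=> h; have -> : logn p d < M by lia.
by rewrite L0.
Qed.


Lemma dvd_pair_eq n d e : 0 < n -> (d * e == n) = (d %| n) && (e == n %/ d).
Proof.
move=> n0; case: d => [|d]; first by rewrite mul0n dvd0n; case: n n0.
apply/idP/idP.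
- by move=> /eqP <-; rewrite dvdn_mulr // mulKn // eqxx.
- by case/andP => dn /eqP ->; rewrite mulnC divnK.
Qed.

Lemma conv_pairs (T : Type) (idx : T) (op : Monoid.com_law idx) n (F : nat -> nat -> T) : 0 < n ->
  \big[op/idx]_(d < n.+1) \big[op/idx]_(e < n.+1 | d * e == n) F d e =
  \big[op/idx]_(d < n.+1 | d %| n) F d (n %/ d).
Proof.
move=> n0; rewrite [RHS]big_mkcond /=; apply: eq_bigr => d _.
rewrite (eq_bigl (fun e : 'I_n.+1 => (fun _ => d %| n) (e : nat) && (e == n %/ d :> nat))); last first.
  by move=> e; rewrite dvd_pair_eq.
rewrite (big_ord1_cond_eq _ (F d) (fun _ => d %| n)).
case dn: (d %| n); last by rewrite andbF.
by rewrite andbT ltnS leq_div.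
Qed.

Lemma bigOmega_big n : bigOmega n = \sum_(p <- primes n) logn p n.
Proof.
rewrite /bigOmega; elim: (primes n) => [|p s IH]; first by rewrite big_nil.
by rewrite big_cons /= IH.
Qed.

Lemma bigOmega_sum n K : 0 < n -> n < K -> bigOmega n = \sum_(p < K) logn p n.
Proof.
move=> n0 nK; rewrite bigOmega_big.
have -> : \sum_(p < K) logn p n = \sum_(p <- iota 0 K | p \in primes n) logn p n.
  rewrite -(big_mkord xpredT (fun p => logn p n)) /index_iota subn0 [RHS]big_mkcond /=; apply: eq_bigr => p _.
  case: ifP => // H; apply/eqP; rewrite eqn0Ngt logn_gt0 H //.
rewrite -(big_filter (iota 0 K)); apply: perm_big.
apply: uniq_perm; first exact: primes_uniq.
  by apply: filter_uniq; apply: iota_uniq.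
move=> p; rewrite mem_filter mem_iota /= add0n.
case pn: (p \in primes n) => //=.
move: pn; rewrite mem_primes => /and3P [_ _ pd].
have := dvdn_leq n0 pd. move=> h; apply/esym; lia.
Qed.

Lemma bigOmega_mul d e : 0 < d -> 0 < e -> bigOmega (d * e) = bigOmega d + bigOmega e.
Proof.
move=> d0 e0.
have de0 : 0 < d * e by rewrite muln_gt0 d0.
rewrite !(bigOmega_sum _ (d * e).+1) //; try (rewrite ltnS; first [exact: leq_pmulr | exact: leq_pmull]).
rewrite -big_split /=; apply: eq_bigr => p _; exact: lognM.
Qed.

Lemma tau_sum n : 0 < n -> tau n = \sum_(d < n.+1 | d %| n) 1.
Proof.
move=> n0; rewrite /tau -(big_mkord (fun d => d %| n) (fun _ => 1)) /index_iota subn0 -(big_filter (iota 0 n.+1)).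
rewrite -(sum1_size (divisors n)); apply: perm_big.
apply: uniq_perm; first exact: divisors_uniq.
  by apply: filter_uniq; apply: iota_uniq.
move=> d; rewrite mem_filter mem_iota /= add0n -dvdn_divisors //.
case dn: (d %| n) => //=.
have := dvdn_leq n0 dn. move=> h; lia.
Qed.


Lemma big_widen0 m M (P : pred nat) (F : nat -> nat) : m <= M ->
  (forall i, m <= i -> i < M -> P i -> F i = 0) ->
  \sum_(i < m | P i) F i = \sum_(i < M | P i) F i.
Proof.
move=> mM H; rewrite (big_ord_widen_cond M P F mM) [LHS]big_mkcond [RHS]big_mkcond /=.
apply: eq_bigr => i _; case Pi: (P i) => //=; case: ifP => // him.
symmetry; apply: H; [by rewrite leqNgt him | exact: ltn_ord | by []].
Qed.

Lemma Jp_sum_div p n : prime p -> 0 < n ->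
  \sum_(d < n.+1 | d %| n) Jp p d = logn p n.
Proof.
move=> pp n0.
rewrite (eq_bigr (fun d : 'I_n.+1 => \sum_(k < n.+1 | 0 < k) ((d : nat) == p ^ k))); last first.
  move=> d dn; rewrite IJ //; try exact: ltn_ord; exact: (dvdn_gt0 n0).
rewrite exchange_big /=.
rewrite (eq_bigr (fun k : 'I_n.+1 => (k <= logn p n : nat))); last first.
  move=> k _.
  rewrite big_mkcond /=.
  rewrite (eq_bigr (fun d : 'I_n.+1 => if (d %| n) && (d == p ^ k :> nat) then 1 else 0)); last first.
    by move=> d _; case: (d %| n); case: (_ == _).
  rewrite -big_mkcond /= (big_ord1_cond_eq _ (fun _ => 1) (fun d => d %| n)).
  rewrite -pfactor_dvdn //.
  case dv: (p ^ k %| n); last by rewrite andbF.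
  by rewrite andbT ltnS dvdn_leq.
apply: count_le. apply: ltnW; exact: ltn_logl.
Qed.

Lemma Omega_Lam n : 0 < n ->
  \sum_(d < n.+1) \sum_(e < n.+1 | d * e == n) Lam0 d = bigOmega n.
Proof.
move=> n0.
rewrite (@conv_pairs _ 0 addn n (fun d _ => Lam0 d) n0) /=.
rewrite (eq_bigr (fun d : 'I_n.+1 => \sum_(p < n.+1 | prime p) Jp p d)); last first.
  move=> d dn; rewrite /Lam0; apply: (big_widen0 d.+1 n.+1 prime (fun p => Jp p d)).
  - exact: ltn_ord.
  - move=> i di _ _; apply: Jp_lt => //; exact: (dvdn_gt0 n0).
rewrite exchange_big /=.
rewrite (eq_bigr (fun p : 'I_n.+1 => logn p n)); last by move=> p pp; apply: Jp_sum_div.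
rewrite (bigOmega_sum n n.+1) // [LHS]big_mkcond /=; apply: eq_bigr => p _.
case pp: (prime p) => //; apply/esym/eqP; by rewrite eqn0Ngt logn_gt0 mem_primes pp.
Qed.

Lemma tauOmega n : 0 < n ->
  tau n * bigOmega n = 2 * \sum_(d < n.+1) \sum_(e < n.+1 | d * e == n) bigOmega d.
Proof.
move=> n0.
have E1 : \sum_(d < n.+1) \sum_(e < n.+1 | d * e == n) bigOmega d =
          \sum_(d < n.+1) \sum_(e < n.+1 | d * e == n) bigOmega e.
  rewrite (eq_bigr (fun d : 'I_n.+1 => \sum_(e < n.+1) if d * e == n then bigOmega d else 0)); last by move=> d _; rewrite big_mkcond.
  rewrite exchange_big /=; apply: eq_bigr => e _; rewrite [RHS]big_mkcond; apply: eq_bigr => d _.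
  by rewrite mulnC.
have E2 : \sum_(d < n.+1) \sum_(e < n.+1 | d * e == n) bigOmega d +
          \sum_(d < n.+1) \sum_(e < n.+1 | d * e == n) bigOmega e =
          bigOmega n * \sum_(d < n.+1) \sum_(e < n.+1 | d * e == n) 1.
  rewrite -big_split big_distrr /=; apply: eq_bigr => d _.
  rewrite -big_split big_distrr /=; apply: eq_bigr => e /eqP de.
  have h : 0 < d * e by rewrite de.
  move: h; rewrite muln_gt0 => /andP [h1 h2].
  by rewrite muln1 -bigOmega_mul // de.
rewrite (@conv_pairs _ 0 addn n (fun _ _ => 1) n0) /= -tau_sum // in E2.
by rewrite mulnC -E2 -E1 addnn mul2n.
Qed.

End Arith.

Lemma Cmod_cpow x s : Cmod (cpow x s) = exp (Re s * ln x).
Proof.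
rewrite /Cmod /cpow /=.
have -> : (exp (Re s * ln x) * cos (Im s * ln x)) ^ 2 + (exp (Re s * ln x) * sin (Im s * ln x)) ^ 2
  = (exp (Re s * ln x))² * ((sin (Im s * ln x))² + (cos (Im s * ln x))²) by rewrite /Rsqr; ring.
rewrite sin2_cos2 Rmult_1_r sqrt_Rsqr //; left; exact: exp_pos.
Qed.

Lemma cpow_neq0 x s : cpow x s <> RtoC 0.
Proof.
move=> H; have := Cmod_cpow x s; rewrite H Cmod_0 => H'.
have := exp_pos (Re s * ln x); lra.
Qed.

Lemma cpow_mult x y s : 0 < x -> 0 < y -> cpow (x * y) s = Cmult (cpow x s) (cpow y s).
Proof.
move=> hx hy; rewrite /cpow /Cmult /= ln_mult //.
rewrite !Rmult_plus_distr_l exp_plus cos_plus sin_plus.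
f_equal; ring.
Qed.

Definition ns (s : C) (n : nat) : C := if n is 0%nat then RtoC 0 else Cinv (cpow (INR n) s).

Lemma ns_mul s d e : ns s (d * e) = Cmult (ns s d) (ns s e).
Proof.
case: d => [|d]; first by rewrite mul0n /= Cmult_0_l.
case: e => [|e]; first by rewrite muln0 /= Cmult_0_r.
have [k Hk] : exists k, (d.+1 * e.+1 = k.+1)%nat by exists (d.+1 * e.+1).-1; lia.
rewrite Hk /ns.
have -> : INR k.+1 = INR d.+1 * INR e.+1 by rewrite -mult_INR; apply: f_equal; lia.
rewrite cpow_mult; try (apply: lt_0_INR; lia).
field; split; exact: cpow_neq0.
Qed.

Lemma Cmod_ns s n : (0 < n)%nat -> Cmod (ns s n) = Rpower (INR n) (- Re s).
Proof.
case: n => [//|n] _; rewrite /ns Cmod_inv; last exact: cpow_neq0.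
by rewrite Cmod_cpow /Rpower -exp_Ropp Ropp_mult_distr_l.
Qed.

Lemma ns_abs s : 1 < Re s -> ex_series (fun n => Cmod (ns s n)).
Proof.
move=> Hs; apply/ex_series_incr_1.
apply: ex_series_ext (pseries_ex (Re s) Hs) => n.
by rewrite Cmod_ns.
Qed.

Lemma ns_lt1 s p : 1 < Re s -> (1 < p)%nat -> Cmod (ns s p) < 1.
Proof.
move=> Hs Hp; rewrite Cmod_ns; last lia.
rewrite Rpower_Ropp -Rinv_1; apply: Rinv_lt_contravar; first by rewrite Rmult_1_l; apply: exp_pos.
rewrite -(Rpower_O (INR p)); last (apply: lt_0_INR; lia).
apply: Rpower_lt; last lra.
have -> : 1 = INR 1 by [].
apply: lt_INR; lia.
Qed.

Lemma ex_series_C (a : nat -> C) : ex_series (fun n => Cmod (a n)) -> exists l, is_series a l.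
Proof.
move=> H.
have : ex_series a.
  apply: (ex_series_le (K := C_AbsRing) (V := C_CompleteNormedModule) a (fun n => Cmod (a n))) => //.
  move=> n; rewrite norm_C; exact: Rle_refl.
by [].
Qed.

Lemma geom_C (w : C) : Cmod w < 1 ->
  is_series (fun k => Cpow w k.+1) (Cdiv w (Cminus (RtoC 1) w)).
Proof.
move=> Hw.
have Hw1 : Cminus (RtoC 1) w <> RtoC 0.
  move=> H; have Ew : w = RtoC 1 by rewrite -[w]Cplus_0_l -H /Cminus; ring.
  by move: Hw; rewrite Ew Cmod_1; lra.
have Hpos : 0 < Cmod (Cminus (RtoC 1) w) by apply/Cmod_gt_0.
have HS : forall N, Cdiv (Cmult w (Cminus (RtoC 1) (Cpow w N.+1))) (Cminus (RtoC 1) w) = sum_n (fun k => Cpow w k.+1) N.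
  elim=> [|N IH]; first by rewrite sum_O; field.
  rewrite sum_Sn -IH; change (plus ?a ?b) with (Cplus a b).
  rewrite !Cpow_S; field => //.
apply: (C_lim_bound _ _ (fun N => (Cmod w ^ 2 / Cmod (Cminus (RtoC 1) w)) * Cmod w ^ N)).
- move=> N; rewrite -HS.
  have -> : Cminus (Cdiv (Cmult w (Cminus (RtoC 1) (Cpow w N.+1))) (Cminus (RtoC 1) w)) (Cdiv w (Cminus (RtoC 1) w))
     = Copp (Cdiv (Cmult (Cpow w 2) (Cpow w N)) (Cminus (RtoC 1) w)).
    rewrite !Cpow_S; field => //.
  rewrite Cmod_opp Cmod_div // Cmod_mult !Cmod_pow.
  apply: Req_le; rewrite /Rdiv; ring.
- have -> : 0 = (Cmod w ^ 2 / Cmod (Cminus (RtoC 1) w)) * 0 by ring.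
  apply: is_lim_seq_mult'; first exact: is_lim_seq_const.
  apply: is_lim_seq_geom; rewrite Rabs_pos_eq //; exact: Cmod_ge_0.
Qed.

Lemma sparse (u : nat -> C) (phi : nat -> nat) :
  (forall k, (phi k < phi k.+1)%nat) -> (forall n, (forall k, n <> phi k) -> u n = RtoC 0) ->
  forall K, sum_n u (phi K) = sum_n (fun k => u (phi k)) K.
Proof.
move=> Hphi Hu.
have mono : forall j k, (j < k)%nat -> (phi j < phi k)%nat.
  move=> j; elim=> [//|k IH]; rewrite ltnS leq_eqVlt => /orP [/eqP <-|/IH h] //.
  apply: ltn_trans h _; exact: Hphi.
have monole : forall j k, (j <= k)%nat -> (phi j <= phi k)%nat.
  move=> j k; rewrite leq_eqVlt => /orP [/eqP <-//|/mono]; exact: ltnW.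
elim=> [|K IH].
- rewrite sum_O sum_n_big big_ord_recr /= big1 ?Cplus_0_l // => i _.
  apply: Hu => k Hk. have := monole 0%nat k (leq0n k). have := ltn_ord i. lia.
- rewrite sum_Sn -IH; change (plus ?a ?b) with (Cplus a b).
  rewrite !sum_n_big -!(big_mkord xpredT u) /index_iota !subn0.
  have h1 := Hphi K.
  rewrite -/(index_iota 0 (phi K.+1).+1) -/(index_iota 0 (phi K).+1).
  rewrite (big_cat_nat _ (n := (phi K).+1)) //=; last by apply: leq_trans h1 _.
  rewrite (big_nat_recr (phi K.+1)) //= Cplus_assoc.
  congr Cplus.
  rewrite [X in Cplus _ X]big_nat_cond [X in Cplus _ X]big1 ?Cplus_0_r // => i /andP [/andP [i1 i2] _].
  apply: Hu => k Hk; subst i.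
  case: (leqP k K) => hk.
  + have := monole _ _ hk. lia.
  + have := monole K.+1 k hk. lia.
Qed.

Lemma is_series_big (I : Type) (r : seq I) (P : pred I) (f : I -> nat -> C) (l : I -> C) :
  (forall i, P i -> is_series (f i) (l i)) ->
  is_series (fun n => \big[Cplus/RtoC 0]_(i <- r | P i) f i n) (\big[Cplus/RtoC 0]_(i <- r | P i) l i).
Proof.
move=> H; elim: r => [|i r IH].
- rewrite big_nil.
  apply: (C_lim_bound _ _ (fun _ => 0)); last exact: is_lim_seq_const.
  move=> N; rewrite sum_n_big big1; last by move=> j _; rewrite big_nil.
  rewrite /Cminus Copp_0 Cplus_0_l Cmod_0; exact: Rle_refl.
- rewrite big_cons.
  apply: (is_series_ext (fun n => if P i then Cplus (f i n) (\big[Cplus/RtoC 0]_(j <- r | P j) f j n)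
                                   else \big[Cplus/RtoC 0]_(j <- r | P j) f j n)).
    by move=> n; rewrite big_cons.
  case Pi: (P i) => //.
  exact: (is_series_plus _ _ _ _ (H i Pi) IH).
Qed.

Lemma C_series_bound (v : nat -> C) l N c : is_series v l ->
  (forall M, (N <= M)%nat -> Cmod (sum_n v M) <= c) -> Cmod l <= c.
Proof.
move=> Hv Hb.
case: (Rle_lt_dec (Cmod l) c) => // Hlt.
have eps_pos : 0 < Cmod l - c by lra.
move: Hv => /(filterlim_locally_ball_norm (K := C_AbsRing)) Hv.
case: (Hv (mkposreal _ eps_pos)) => M HM.
have := HM (maxn M N) (ltac:(apply/ssrnat.leP; exact: leq_maxl)).
rewrite /ball_norm /= norm_C => H1.
have := Hb (maxn M N) (leq_maxr _ _).
have := Cmod_minus_le l (sum_n v (maxn M N)).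
have H1' : Cmod (Cminus (sum_n v (maxn M N)) l) < Cmod l - c := H1.
have E : Cmod (Cminus l (sum_n v (maxn M N))) = Cmod (Cminus (sum_n v (maxn M N)) l).
  rewrite -Cmod_opp; congr Cmod; rewrite /Cminus; ring.
rewrite E. lra.
Qed.

Section Main.
Variable s : C.
Hypothesis Hs : 1 < Re s.

Lemma ns_pow p k : ns s (p ^ k.+1) = Cpow (ns s p) k.+1.
Proof.
elim: k => [|k IH]; first by rewrite expn1 Cpow_1_r.
by rewrite expnS ns_mul IH Cpow_S.
Qed.

Lemma ns0 : ns s 0 = RtoC 0.
Proof. by []. Qed.

Lemma P1_prime p : prime p -> P1_term s p = Cinv (Cminus (cpow (INR p) s) (RtoC 1)).
Proof. by rewrite /P1_term => ->. Qed.

Lemma geom_p p : prime p -> is_series (fun k => ns s (p ^ k.+1)) (P1_term s p).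
Proof.
move=> pp.
have p1 : (1 < p)%nat by apply: prime_gt1.
have Hw := ns_lt1 s p Hs p1.
apply: (is_series_ext (fun k => Cpow (ns s p) k.+1)); first by move=> k; rewrite ns_pow.
have -> : P1_term s p = Cdiv (ns s p) (Cminus (RtoC 1) (ns s p)).
  rewrite P1_prime //.
  have c0 := cpow_neq0 (INR p) s.
  have [q Hq] : exists q, p = q.+1 by exists p.-1; lia.
  have Ens : ns s p = Cinv (cpow (INR p) s) by rewrite Hq.
  rewrite Ens in Hw *.
  have c1 : Cminus (cpow (INR p) s) (RtoC 1) <> RtoC 0.
    move=> H; have E1 : cpow (INR p) s = RtoC 1.
      have -> : cpow (INR p) s = Cplus (Cminus (cpow (INR p) s) (RtoC 1)) (RtoC 1) by rewrite /Cminus; ring.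
      rewrite H; ring.
    move: Hw; rewrite E1. have -> : Cinv (RtoC 1) = RtoC 1 by field. rewrite Cmod_1; lra.
  have c2 : Cminus (RtoC 1) (Cinv (cpow (INR p) s)) <> RtoC 0.
    move=> H; apply: c1.
    have -> : Cminus (cpow (INR p) s) (RtoC 1) = Cmult (cpow (INR p) s) (Cminus (RtoC 1) (Cinv (cpow (INR p) s))) by field.
    by rewrite H Cmult_0_r.
  field; split => //.
exact: geom_C.
Qed.

Lemma Jp_series p : prime p -> is_series (fun n => Cmult (RtoC (INR (Jp p n))) (ns s n)) (P1_term s p).
Proof.
move=> pp.
have p1 : (1 < p)%nat by apply: prime_gt1.
set u := fun n => Cmult (RtoC (INR (Jp p n))) (ns s n).
have Hu : forall n, Cmod (u n) <= Cmod (ns s n).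
  move=> n; rewrite /u Cmod_mult Cmod_R Rabs_pos_eq; last exact: pos_INR.
  have := Jp_le p n; case: (Jp p n) => [|[|//]] _ /=; rewrite ?Rmult_0_l ?Rmult_1_l; [exact: Cmod_ge_0|exact: Rle_refl].
have [l Hl] : exists l, is_series u l.
  apply: ex_series_C; apply: (ex_series_le _ (fun n => Cmod (ns s n))); last exact: ns_abs.
  move=> n; rewrite /norm /= /abs /= Rabs_pos_eq; [exact: Hu|exact: Cmod_ge_0].
set phi := fun k => (p ^ k.+1)%nat.
have Hphi : forall k, (phi k < phi k.+1)%nat by move=> k; rewrite /phi ltn_exp2l.
have Hz : forall n, (forall k, n <> phi k) -> u n = RtoC 0.
  move=> n Hn; rewrite /u.
  case J: (Jp p n) => [|j]; first by rewrite Cmult_0_l.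
  exfalso; apply: (Hn (logn p n).-1); apply: Jp_pos; rewrite J //.
have Huphi : forall k, u (phi k) = ns s (p ^ k.+1).
  by move=> k; rewrite /u /phi Jp_pow // Cmult_1_l.
have Hphi_inf : filterlim phi eventually eventually.
  move=> P [M HM]; exists M => k Hk; apply: HM.
  apply/ssrnat.leP; apply: leq_trans (_ : k <= phi k)%nat; first by apply/ssrnat.leP.
  rewrite /phi; apply: ltnW; exact: ltn_trans (ltnSn k) (ltn_expl _ p1).
have Hsub : is_series (fun k => ns s (p ^ k.+1)) l.
  have H1 : filterlim (fun K => sum_n u (phi K)) eventually (locally l) := filterlim_comp _ _ _ phi (sum_n u) _ _ _ Hphi_inf Hl.
  apply: (is_series_ext (fun k => u (phi k))) => //.
  move: H1; apply: filterlim_ext => K; exact: sparse.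
have -> : P1_term s p = l.
  apply: (filterlim_locally_unique (F := eventually) (sum_n (fun k => ns s (p ^ k.+1)))).
  - exact: (geom_p p pp).
  - exact: Hsub.
exact: Hl.
Qed.
End Main.

Definition LamN (N n : nat) : nat := \sum_(p < N.+1 | prime p) Jp p n.

Lemma Jp0 p : Jp p 0 = 0%nat.
Proof. by rewrite /Jp logn0. Qed.

Lemma Lam0_LamN N n : (n <= N)%nat -> Lam0 n = LamN N n.
Proof.
move=> nN; rewrite /Lam0 /LamN.
case: n nN => [|n] nN.
  rewrite !big1 // => p _; exact: Jp0.
apply: (big_widen0 n.+2 N.+1 prime (fun p => Jp p n.+1)) => // i hi _ _.
by apply: Jp_lt.
Qed.

Lemma LamN_le N n : (LamN N n <= Lam0 n)%nat.
Proof.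
case: (leqP n N) => h; first by rewrite (Lam0_LamN N n h).
have hN : (N.+1 <= n.+1)%nat by rewrite ltnS ltnW.
rewrite /Lam0 /LamN (big_ord_widen_cond n.+1 prime (fun p => Jp p n) hN).
rewrite big_mkcond [X in (_ <= X)%nat]big_mkcond /=; apply: leq_sum => i _.
by case: (prime i); case: (i < N.+1)%nat.
Qed.

Lemma INR_big (I : Type) (r : seq I) (P : pred I) (F : I -> nat) :
  RtoC (INR (\sum_(i <- r | P i) F i)) = \big[Cplus/RtoC 0]_(i <- r | P i) RtoC (INR (F i)).
Proof.
apply: (big_morph (fun n => RtoC (INR n))).
- by move=> a b; rewrite plus_INR RtoC_plus.
- by [].
Qed.

Section Main2.
Variable s : C.
Hypothesis Hs : 1 < Re s.

Definition lam (n : nat) : C := Cmult (RtoC (INR (Lam0 n))) (ns s n).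

Lemma lam_abs : ex_series (fun n => Cmod (lam n)).
Proof.
apply: (ex_series_le _ (fun n => Cmod (ns s n))); last exact: ns_abs.
move=> n; rewrite /norm /= /abs /= Rabs_pos_eq; last exact: Cmod_ge_0.
rewrite /lam Cmod_mult Cmod_R Rabs_pos_eq; last exact: pos_INR.
have := Lam0_le1 n; case: (Lam0 n) => [|[|//]] _ /=; rewrite ?Rmult_0_l ?Rmult_1_l; [exact: Cmod_ge_0|exact: Rle_refl].
Qed.

Lemma LamN_series N : is_series (fun n => Cmult (RtoC (INR (LamN N n))) (ns s n))
   (\big[Cplus/RtoC 0]_(p < N.+1 | prime p) P1_term s p).
Proof.
apply: (is_series_ext (fun n => \big[Cplus/RtoC 0]_(p < N.+1 | prime p) Cmult (RtoC (INR (Jp p n))) (ns s n))).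
  by move=> n; rewrite /LamN INR_big bigC_mulr.
apply: is_series_big => p pp; exact: Jp_series.
Qed.

Lemma P1_series L : is_series lam L -> is_series (P1_term s) L.
Proof.
move=> HL.
have [X HX] := ns_abs s Hs.
apply: (C_lim_bound _ _ (fun N => X - sum_n (fun n => Cmod (ns s n)) N)).
- move=> N.
  have -> : sum_n (P1_term s) N = \big[Cplus/RtoC 0]_(p < N.+1 | prime p) P1_term s p.
    rewrite sum_n_big [RHS]big_mkcond /=; apply: eq_bigr => p _; rewrite /P1_term; by case: (prime p).
  rewrite -Cmod_opp.
  have -> : Copp (Cminus (\big[Cplus/RtoC 0]_(p < N.+1 | prime p) P1_term s p) L) =
            Cplus L (Copp (\big[Cplus/RtoC 0]_(p < N.+1 | prime p) P1_term s p)) by rewrite /Cminus; ring.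
  apply: (C_series_bound _ _ N _ (is_series_minus _ _ _ _ HL (LamN_series N))).
  move=> M NM.
  rewrite sum_n_big; apply: Rle_trans (bigC_Cmod _ _ _ _) _.
  apply: Rle_trans (_ : _ <= \big[Rplus/0]_(n < M.+1 | (N < n)%nat) Cmod (ns s n)) _.
    rewrite [X in _ <= X]big_mkcond /=; apply: bigR_le => n _.
    have -> : Cmod (plus (lam n) (opp (Cmult (RtoC (INR (LamN N n))) (ns s n)))) =
              (INR (Lam0 n) - INR (LamN N n)) * Cmod (ns s n).
      rewrite /plus /opp /= /lam.
      have -> : Cplus (Cmult (RtoC (INR (Lam0 n))) (ns s n)) (Copp (Cmult (RtoC (INR (LamN N n))) (ns s n)))
          = Cmult (RtoC (INR (Lam0 n) - INR (LamN N n))) (ns s n).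
        rewrite /Rminus RtoC_plus RtoC_opp; ring.
      rewrite Cmod_mult Cmod_R Rabs_pos_eq //.
      rewrite -minus_INR; [exact: pos_INR | apply/ssrnat.leP; exact: LamN_le].
    case: (leqP n N) => h.
    + rewrite (Lam0_LamN N n h) Rminus_diag Rmult_0_l; exact: Rle_refl.
    + rewrite -[X in _ <= X]Rmult_1_l; apply: Rmult_le_compat_r; first exact: Cmod_ge_0.
      have := Lam0_le1 n; have := LamN_le N n.
      move=> /ssrnat.leP /le_INR h1 /ssrnat.leP /le_INR h2.
      have := pos_INR (LamN N n). simpl INR in h2. lra.
  rewrite (tail_sum (fun n => Cmod (ns s n))) //.
  have := sum_n_le_lim (fun n => Cmod (ns s n)) X M (fun n => Cmod_ge_0 _) HX. lra.
- have -> : 0 = X - X by ring.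
  apply: is_lim_seq_minus'; [exact: is_lim_seq_const | exact: HX].
Qed.

End Main2.

Lemma dconv_eval s (c : nat -> nat) n :
  dconv (fun m => Cmult (RtoC (INR (c m))) (ns s m)) (ns s) n =
  Cmult (RtoC (INR (\sum_(d < n.+1) \sum_(e < n.+1 | (d * e == n)%nat) c d))) (ns s n).
Proof.
rewrite /dconv INR_big bigC_mulr; apply: eq_bigr => d _.
rewrite INR_big bigC_mulr; apply: eq_bigr => e /eqP de.
by rewrite -Cmult_assoc -ns_mul de.
Qed.

Lemma bigOmega_prime p : prime p -> bigOmega p = 1%nat.
Proof. move=> pp; by rewrite bigOmega_big primes_prime // big_cons big_nil logn_prime // eqxx. Qed.

Theorem theorem4p1 (s : C) (Hs : 1 < Re s) :
  exists (z P : C),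
    is_series (zeta_term s) z /\
    is_series (POmega_term s) P /\
    is_series (P1_term s) P /\
    is_series (tauOmega_term s) (Cmult (RtoC 2) (Cmult (Cmult z z) P)).
Proof.
have [Z HZ] := ex_series_C _ (ns_abs s Hs).
have [L HL] := ex_series_C _ (lam_abs s Hs).
exists Z, L.
have HP1 := P1_series s Hs L HL.
split; [|split; [|split]] => //.
- apply: (is_series_incr_1 (ns s)).
  by rewrite /plus /= Cplus_0_r.
- apply: is_series_ext HP1 => p.
  rewrite /POmega_term /P1_term; case pp: (prime p) => //.
  by rewrite bigOmega_prime // /Cdiv Cmult_1_l.
-
  set om := fun n => Cmult (RtoC (INR (bigOmega n))) (ns s n).
  have E1 : forall n, dconv (lam s) (ns s) n = om n.
    move=> n; rewrite /lam dconv_eval /om.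
    case: n => [|n]; first by rewrite /= !Cmult_0_r.
    by rewrite Omega_Lam.
  have [H1 H1a] := dconv_series (lam s) (ns s) L Z (Cmult_0_r _) erefl (lam_abs s Hs) (ns_abs s Hs) HL HZ.
  have Hom : is_series om (Cmult L Z) by apply: is_series_ext H1.
  have Homa : ex_series (fun n => Cmod (om n)).
    by apply: ex_series_ext H1a => n; rewrite E1.
  have [H2 _] := dconv_series om (ns s) (Cmult L Z) Z (Cmult_0_r _) erefl Homa (ns_abs s Hs) Hom HZ.
  set T := fun n => Cmult (RtoC (INR (tau n * bigOmega n))) (ns s n).
  have ET : forall n, T n = Cmult (RtoC 2) (dconv om (ns s) n).
    move=> n; rewrite /T /om dconv_eval.
    case: n => [|n]; first by rewrite /= !Cmult_0_r.
    rewrite tauOmega // mult_INR RtoC_mult Cmult_assoc; congr Cmult.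
  have HT : is_series T (Cmult (RtoC 2) (Cmult (Cmult L Z) Z)).
    apply: (is_series_ext (fun n => scal (RtoC 2) (dconv om (ns s) n))); first by move=> n; rewrite ET.
    exact: (is_series_scal (K := C_AbsRing) (V := C_NormedModule)).
  have -> : Cmult (RtoC 2) (Cmult (Cmult Z Z) L) = Cmult (RtoC 2) (Cmult (Cmult L Z) Z) by ring.
  apply: (is_series_incr_1 T).
  rewrite /plus /= /T /=. by rewrite !Cmult_0_r Cplus_0_r.
Qed.
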